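(* Let $n\geq3$ and let $\lambda=\langle\lambda_1,\dots,\lambda_k\rangle$ be a composition of $n-1$ with $\lambda_1\geq2$ and $\lambda_k\geq2$. If $\lambda_j>\lambda_1+1$ for some $j\in\{2,\dots,k\}$, then the matrix $H_\lambda$ is not a minimal matrix representation, i.e. the $n\times(n+1)$ matrix $[0\,|\,H_\lambda]$ obtained by prepending a zero column is not a minimal matrix representation.
   Context: Definition of $H_\lambda$: partition the rows $1,\dots,n$ into consecutive blocks $R_0=\{1\},R_1,\dots,R_k$ with $|R_j|=\lambda_j$, and the columns $1,\dots,n$ into consecutive blocks $C_1,\dots,C_k,C_{k+1}=\{n\}$ with $|C_j|=\lambda_j$ for $j\le k$. $H_\lambda$ is the $n\times n$ $0/1$-matrix whose block $(R_j,C_j)$ is $I_{\lambda_j}$ for $1\le j\le k$, whose blocks $(R_i,C_j)$ with $i>j$ are zero, and whose blocks $(R_i,C_j)$ with $0\le i<j\le k+1$ are all ones if $j-i$ is odd and all zeros if $j-i$ is even. Minimal matrix representation: for $x\in\{0,1\}^n$ its column number is $(2^0,2^1,\dots,2^{n-1})x$; for an $n\times m$ $0/1$-matrix $P$ with distinct columns, $\nu(P)$ is the increasingly sorted vector of its column numbers. $P$ is a minimal matrix representation if its column numbers are strictly increasing from left to right and $\nu(P)\preceq\nu(Q)$ lexicographically for every $Q$ obtained from $P$ by complementing (exchanging $0\leftrightarrow1$) the entries of some subset of rows and then permuting rows. *)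

(* Defs.v *)
From mathcomp Require Import all_boot all_order all_algebra all_fingroup.
Set Implicit Arguments. Unset Strict Implicit. Unset Printing Implicit Defensive.

(* Conventions: rows/columns are 0-based ('I_n); row r (0-based) is row r+1
   of the paper.  A composition lam = [:: lam_1; ...; lam_k] is a seq nat. *)

Definition psum (lam : seq nat) (j : nat) : nat := sumn (take j lam).

(* block index of the (0-based) row r: 0 for r = 0 (R_0 = {1}), and the j in
   1..k with psum (j-1) < r <= psum j otherwise (rows 1-based r+1 in
   2 + psum(j-1) .. 1 + psum j). *)
Definition rowblk (lam : seq nat) (r : nat) : nat :=
  count (fun j => psum lam j < r) (iota 0 (size lam)).

(* block index of the (0-based) column c: the j in 1..k with
   psum (j-1) <= c < psum j, or k+1 for c = psum k (= n-1, the last column). *)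
Definition colblk (lam : seq nat) (c : nat) : nat :=
  count (fun j => psum lam j <= c) (iota 0 (size lam).+1).

Definition Hentry (lam : seq nat) (r c : nat) : bool :=
  let i := rowblk lam r in
  let j := colblk lam c in
  if i == j then r.-1 == c
  else if j < i then false
  else odd (j - i).

Definition Hmat (n : nat) (lam : seq nat) : 'M[bool]_n :=
  \matrix_(r < n, c < n) Hentry lam r c.

Definition zeroH (n : nat) (lam : seq nat) : 'M[bool]_(n, 1 + n) :=
  row_mx (const_mx false) (Hmat n lam).

Definition colnum n m (P : 'M[bool]_(n, m)) (j : 'I_m) : nat :=
  \sum_(i < n) (P i j : nat) * 2 ^ i.

Definition nu n m (P : 'M[bool]_(n, m)) : seq nat :=
  sort leq [seq colnum P j | j <- enum 'I_m].

Fixpoint lexle (s t : seq nat) : bool :=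
  match s, t with
  | [::], _ => true
  | _ :: _, [::] => false
  | x :: s', y :: t' => (x < y) || ((x == y) && lexle s' t')
  end.

Definition compl_perm n m (S : {set 'I_n}) (s : 'S_n) (P : 'M[bool]_(n, m))
  : 'M[bool]_(n, m) :=
  \matrix_(i, j) (if s i \in S then ~~ P (s i) j else P (s i) j).

Definition distinct_cols n m (P : 'M[bool]_(n, m)) : Prop :=
  forall j1 j2 : 'I_m, j1 != j2 -> exists i, P i j1 != P i j2.

Definition minimal_rep n m (P : 'M[bool]_(n, m)) : Prop :=
  [/\ distinct_cols P,
      (forall j1 j2 : 'I_m, (j1 < j2)%N -> (colnum P j1 < colnum P j2)%N) &
      forall (S : {set 'I_n}) (s : 'S_n), lexle (nu P) (nu (compl_perm S s P))].

(* Main.v *)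
Require Import Defs.
From mathcomp Require Import all_boot all_order all_algebra all_fingroup.
From mathcomp Require Import zify.


Lemma lex_key (A r : seq nat) (b y : nat) (u : seq nat) :
  sorted leq u -> sorted ltn (rcons A b) -> {subset rcons A b <= u} -> b < y ->
  ~~ lexle (A ++ y :: r) u.
Proof.
elim: A u => [|x A IH] [|h u] /= su sA sub lby.
- by have := sub b; rewrite mem_seq1 eqxx in_nil => /(_ isT).
- have hb : h <= b.
    have := sub b; rewrite mem_seq1 eqxx inE => /(_ isT) /orP [/eqP->//|bu].
    by have := order_path_min leq_trans su => /allP/(_ _ bu).
  by rewrite ltnNge (leq_trans hb (ltnW lby)) /= (gtn_eqF (leq_ltn_trans hb lby)).
- by have := sub x; rewrite inE eqxx in_nil => /(_ isT).
- have hx : h <= x.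
    have := sub x; rewrite inE eqxx inE => /(_ isT) /orP [/eqP->//|xu].
    by have := order_path_min leq_trans su => /allP/(_ _ xu).
  rewrite ltnNge hx /=; case: eqP => [exh|] //=; subst h.
  apply: IH => //; first exact: path_sorted su.
  - exact: path_sorted sA.
  - move=> z zA; have := sub z; rewrite inE zA orbT inE => /(_ isT) /orP [/eqP ezx|//].
    have := order_path_min ltn_trans sA => /allP/(_ _ zA).
    by rewrite ezx ltnn.
Qed.


Lemma psum0 lam : psum lam 0 = 0.
Proof. by rewrite /psum take0. Qed.

Lemma psumS lam j : psum lam j.+1 = psum lam j + nth 0 lam j.
Proof.
rewrite /psum; elim: lam j => [|x l IH] [|j] //=.
  by rewrite take0 addn0.
by rewrite IH addnA.
Qed.

Lemma psum_mono lam i j : i <= j -> psum lam i <= psum lam j.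
Proof.
elim: j => [|j IH]; first by rewrite leqn0 => /eqP->.
rewrite leq_eqVlt => /orP[/eqP->//|]; rewrite ltnS => /IH h.
by rewrite psumS (leq_trans h (leq_addr _ _)).
Qed.

Arguments psum_mono lam {i j}.

Lemma nth_pos lam j : all (fun x => 0 < x) lam -> j < size lam -> 0 < nth 0 lam j.
Proof. by move=> /allP H jk; apply: H; rewrite mem_nth. Qed.

Lemma psum_strict lam j j' : all (fun x => 0 < x) lam -> j < j' -> j < size lam ->
  psum lam j < psum lam j'.
Proof.
move=> Hp jj' jk; apply: (@leq_trans (psum lam j.+1)); last exact: psum_mono.
by rewrite psumS -addn1 leq_add2l nth_pos.
Qed.

Lemma psum_size lam : psum lam (size lam) = sumn lam.
Proof. by rewrite /psum take_size. Qed.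

Lemma cnt_thr (P : pred nat) K t : t <= K -> (forall j, j < K -> P j = (j < t)) ->
  count P (iota 0 K) = t.
Proof.
move=> tK PE; rewrite -(subnKC tK) iotaD count_cat add0n.
rewrite (@eq_in_count _ _ predT); last first.
  by move=> j; rewrite mem_iota add0n => /andP[_ jt]; rewrite PE ?jt // (leq_trans jt tK).
rewrite count_predT size_iota.
rewrite (@eq_in_count _ _ pred0) ?count_pred0 ?addn0 //.
move=> j; by rewrite mem_iota subnKC // => /andP[tj jK]; rewrite PE // ltnNge tj.
Qed.

Lemma rowblk0 lam : rowblk lam 0 = 0.
Proof. by rewrite /rowblk (@eq_count _ _ pred0) ?count_pred0. Qed.

Lemma colblk_ge1 lam c : 0 < colblk lam c.
Proof. by rewrite /colblk /= psum0. Qed.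

Lemma rowblkS lam c : c < psum lam (size lam) -> rowblk lam c.+1 = colblk lam c.
Proof.
move=> cl; rewrite /colblk /rowblk -(addn1 (size lam)) iotaD count_cat /= add0n.
by rewrite leqNgt cl /= !addn0.
Qed.

Lemma Hentry_diag lam r c : rowblk lam r = colblk lam c -> Hentry lam r c = (r.-1 == c).
Proof. by move=> h; rewrite /Hentry h eqxx. Qed.

Lemma Hentry_eq lam r c1 c2 : colblk lam c1 = colblk lam c2 ->
  (r = 0 \/ (r.-1 != c1 /\ r.-1 != c2)) -> Hentry lam r c1 = Hentry lam r c2.
Proof.
move=> h [->|[n1 n2]]; rewrite /Hentry h //.
by rewrite rowblk0 eq_sym (negbTE (lt0n_neq0 (colblk_ge1 _ _))).
by rewrite (negbTE n1) (negbTE n2).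
Qed.

Section Blocks.
Variables (lam : seq nat).
Hypothesis Hpos : all (fun x => 0 < x) lam.
Hypothesis Hk : 2 <= size lam.
Let a := nth 0 lam 0.

Lemma psum1 : psum lam 1 = a.
Proof. by rewrite psumS psum0. Qed.

Lemma colblk_C1 c : c < a -> colblk lam c = 1.
Proof.
move=> ca; apply: cnt_thr => // j _; case: j => [|j]; first by rewrite psum0.
rewrite ltnNge; have := psum_mono lam (isT : 1 <= j.+1); rewrite psum1 => h.
by apply/negbTE; rewrite -ltnNge (leq_trans ca h).
Qed.

Lemma rowblk_R1 r : 0 < r -> r <= a -> rowblk lam r = 1.
Proof.
move=> r0 ra; apply: cnt_thr; first by apply: leq_trans Hk.
move=> [|j] _; first by rewrite psum0.
have := psum_mono lam (isT : 1 <= j.+1); rewrite psum1 => h.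
by apply/negbTE; rewrite -leqNgt (leq_trans ra h).
Qed.

Lemma rowblk_R2 r : a < r -> 2 <= rowblk lam r.
Proof.
move=> ar; rewrite /rowblk -(subnKC Hk) iotaD count_cat /= psum0 psum1 ar.
have -> : 0 < r by apply: leq_ltn_trans ar.
by rewrite /= leq_addr.
Qed.

Lemma colblk_a : colblk lam a = 2.
Proof.
apply: cnt_thr; first by apply: leq_trans Hk _.
move=> [|[|j]] _; rewrite ?psum0 ?psum1 ?leqnn //.
have := psum_mono lam (isT : 2 <= j.+2); rewrite psumS psum1 => h.
apply/negbTE; rewrite -ltnNge; apply: leq_trans h.
by rewrite -addn1 leq_add2l nth_pos.
Qed.

Lemma rowblk_last : rowblk lam (psum lam (size lam)) = size lam.
Proof.
apply: cnt_thr => // j jk; rewrite jk; exact: psum_strict.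
Qed.

Lemma colblk_last : colblk lam (psum lam (size lam)) = (size lam).+1.
Proof.
apply: cnt_thr => // j jk; rewrite jk; apply: psum_mono; by rewrite -ltnS.
Qed.

Lemma colblk_J J c : J < size lam -> psum lam J <= c < psum lam J.+1 ->
  colblk lam c = J.+1.
Proof.
move=> Jk /andP[pc cp]; apply: cnt_thr => [|j _]; first by rewrite ltnS ltnW.
case: (ltnP j J.+1) => jJ.
  by apply: leq_trans (psum_mono lam _) pc; rewrite -ltnS.
by apply/negbTE; rewrite -ltnNge; apply: leq_trans cp (psum_mono lam jJ).
Qed.

Lemma E1 c : c < a -> Hentry lam 0 c = true.
Proof. by move=> ca; rewrite /Hentry rowblk0 colblk_C1. Qed.

Lemma E2 r c : c < a -> 0 < r -> r <= a -> Hentry lam r c = (r.-1 == c).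
Proof. by move=> ca r0 ra; apply: Hentry_diag; rewrite colblk_C1 ?rowblk_R1. Qed.

Lemma E3 r c : c < a -> a < r -> Hentry lam r c = false.
Proof.
move=> ca ar; rewrite /Hentry colblk_C1 //; have := @rowblk_R2 r ar.
by case: (rowblk lam r) => [|[|i]].
Qed.

Lemma E4 : 0 < a -> Hentry lam 1 a = true.
Proof. by move=> a0; rewrite /Hentry colblk_a (@rowblk_R1 1). Qed.

Lemma E5 c : c < psum lam (size lam) -> Hentry lam c.+1 c = true.
Proof. by move=> cl; rewrite Hentry_diag /= ?eqxx // rowblkS. Qed.

Lemma E6 : Hentry lam (psum lam (size lam)) (psum lam (size lam)) = true.
Proof.
rewrite /Hentry rowblk_last colblk_last.
by rewrite (ltn_eqF (ltnSn _)) ltnNge leqnSn /= subSnn.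
Qed.
End Blocks.


Lemma cn_lb n m (P : 'M[bool]_(n,m)) j (i : 'I_n) : P i j -> 2 ^ i <= colnum P j.
Proof. by move=> h; rewrite /colnum (bigD1 i) //= h mul1n leq_addr. Qed.

Lemma cn_lb2 n m (P : 'M[bool]_(n,m)) j (i1 i2 : 'I_n) : i1 != i2 -> P i1 j -> P i2 j ->
  2 ^ i1 + 2 ^ i2 <= colnum P j.
Proof.
move=> ne h1 h2; rewrite /colnum (bigD1 i1) //= (bigD1 i2) /=; last by rewrite eq_sym.
by rewrite h1 h2 !mul1n addnA leq_addr.
Qed.

Lemma cn_exact2 n m (P : 'M[bool]_(n,m)) j (i1 i2 : 'I_n) : i1 != i2 ->
  (forall i : 'I_n, P i j = (val i == val i1) || (val i == val i2)) ->
  colnum P j = 2 ^ i1 + 2 ^ i2.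
Proof.
move=> ne h; rewrite /colnum (bigD1 i1) //= (bigD1 i2) /=; last by rewrite eq_sym.
rewrite !h !eqxx orbT /= !mul1n addnA big1 ?addn0 // => i /andP[n2 n1].
by rewrite h -[val i == val i1]/(i == i1) -[val i == val i2]/(i == i2) (negbTE n1) (negbTE n2).
Qed.

Lemma cn_zero n m (P : 'M[bool]_(n,m)) j : (forall i, P i j = false) -> colnum P j = 0.
Proof. by move=> h; rewrite /colnum big1 // => i _; rewrite h. Qed.

Lemma zeroH_E n lam i (j : 'I_(1+n)) :
  zeroH n lam i j = if nat_of_ord j == 0 then false else Hentry lam i (nat_of_ord j).-1.
Proof.
rewrite /zeroH mxE; case: splitP => [j1 ej|j2 ej]; rewrite /= ej.
  by rewrite (ord1 j1) mxE.
by rewrite mxE.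
Qed.

Lemma map_enum_inord N (h : 'I_N.+1 -> nat) :
  [seq h j | j <- enum 'I_N.+1] = [seq h (inord c) | c <- iota 0 N.+1].
Proof.
by rewrite -val_enum_ord -map_comp; apply: eq_map => j /=; rewrite inord_val.
Qed.

Definition gg m := if m == 0 then 0 else 1 + 2 ^ m.

Lemma gg_sorted t : sorted ltn (map gg (iota 0 t)).
Proof.
rewrite sorted_map; apply: (sub_sorted _ (iota_ltn_sorted 0 t)) => x y /= xy.
rewrite /gg (gtn_eqF (leq_ltn_trans (leq0n x) xy)).
by case: eqP => // _; rewrite ltn_add2l ltn_exp2l.
Qed.


Theorem proposition6p4 (n : nat) (lam : seq nat) :
  (3 <= n)%N ->
  all (fun x => 0 < x)%N lam ->
  sumn lam = n.-1 ->
  (2 <= nth 0 lam 0)%N ->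
  (2 <= last 0 lam)%N ->
  (exists j, (1 <= j < size lam)%N /\ (nth 0 lam 0 + 1 < nth 0 lam j)%N) ->
  ~ minimal_rep (zeroH n lam).
Proof.
move=> n3 Hpos Hsum ha _ [J [/andP[J1 Jk] hJ]] [_ _ Hmin].
have Hk : 1 < size lam by apply: leq_ltn_trans Jk.
have Hps : psum lam (size lam) = n.-1 by rewrite psum_size.
have a1 := psum1 lam.
set a := nth 0 lam 0 in ha hJ a1.
set p := psum lam J. set L := nth 0 lam J.
have HpS : psum lam J.+1 = p + L by rewrite psumS.
have pa : a <= p by rewrite -a1; apply: psum_mono.
have pLn : p + L <= n.-1 by rewrite -HpS -Hps; apply: psum_mono.
have n0 : 0 < n by lia.
have cbJ : forall c, p <= c < p + L -> colblk lam c = J.+1.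
  by move=> c hc; apply: colblk_J => //; rewrite HpS.
pose f := fun i : 'I_n => Ordinal (ltn_pmod (i + p.+1) n0).
have finj : injective f.
  move=> i1 i2 /(congr1 val) /= /eqP; rewrite eqn_modDr !modn_small // => /eqP.
  exact: val_inj.
pose s := perm finj.
have sE : forall i : 'I_n, val (s i) = (i + p.+1) %% n by move=> i; rewrite permE.
pose Z := zeroH n lam.
have hp1 : p.+1 < 1 + n by lia.
pose S := [set r | Z r (Ordinal hp1)].
pose Q := compl_perm S s Z.
have := Hmin S s; apply/negP.
pose F := fun c => colnum Z (inord c).
have nuZ : nu Z = sort leq (map F (iota 0 n.+1)) by rewrite /nu map_enum_inord.
have FA : forall c, c <= a -> F c = gg c.
  move=> [|c'] hc; rewrite /F.
    by apply: cn_zero => i; rewrite /Z zeroH_E inordK.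
  have c'n : c'.+1 < n by lia.
  rewrite (@cn_exact2 _ _ _ _ (Ordinal n0) (Ordinal c'n)) //.
  move=> i; rewrite /Z zeroH_E inordK ?ltnS /=; last by lia.
  have [i0|i0] := posnP i; first by rewrite i0 E1.
  case: (leqP i a) => ia.
    rewrite E2 //; move: i0 ia hc; case: (nat_of_ord i) => //= i' _ _ _.
  rewrite E3 //; lia.
have FR : forall c, a < c <= n -> gg a.+1 < F c.
  move=> [|c'] /andP[ac cn]; first by [].
  have e2 : 2 <= 2 ^ a.+1 by rewrite expnS; have := expn_gt0 2 a; lia.
  rewrite /F /gg /=.
  have [ea|na] := eqVneq c' a.
    subst c'.
    have h1 : 1 < n by lia.
    have h2 : a.+1 < n by lia.
    apply: leq_trans (@cn_lb2 _ _ _ _ (Ordinal h1) (Ordinal h2) _ _ _).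
    - by rewrite expn1 ltn_add2r.
    - by apply/eqP => /(congr1 val) /=; lia.
    - by rewrite /Z zeroH_E inordK //= E4 //; lia.
    - by rewrite /Z zeroH_E inordK //= E5 // Hps; lia.
  have e3 : 2 ^ a.+2 <= 2 ^ (minn c'.+1 n.-1).
    by rewrite leq_pexp2l //; lia.
  have e4 : 2 ^ a.+2 = 2 * 2 ^ a.+1 by rewrite expnS.
  suff : 2 ^ (minn c'.+1 n.-1) <= colnum Z (inord c'.+1) by lia.
  case: (ltnP c' n.-1) => cn1.
    have h : c'.+1 < n by lia.
    rewrite (minn_idPl _); last by lia.
    apply: (@cn_lb _ _ _ _ (Ordinal h)).
    by rewrite /Z zeroH_E inordK //= E5 // Hps.
  have h : n.-1 < n by lia.
  rewrite (minn_idPr _); last by lia.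
  apply: (@cn_lb _ _ _ _ (Ordinal h)).
  have -> : c' = n.-1 by lia.
  rewrite /Z zeroH_E inordK /=; last by lia.
  by rewrite -Hps E6.
have QA : forall m, m <= a.+1 -> gg m \in nu Q.
  move=> m hm.
  have hmn : (p + m).+1 < 1 + n by lia.
  suff <- : colnum Q (Ordinal hmn) = gg m.
    by rewrite /nu mem_sort; apply: map_f; rewrite mem_enum.
  have QE : forall i, Q i (Ordinal hmn) = (if Hentry lam (s i) p then ~~ Hentry lam (s i) (p + m)
     else Hentry lam (s i) (p + m)).
    move=> i; rewrite /Q /compl_perm mxE inE /Z !zeroH_E /=; reflexivity.
  case: m hm hmn QE => [|m] hm hmn QE.
    by apply: cn_zero => i; rewrite QE addn0; case: Hentry.
  have mL : m.+1 < L by lia.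
  have cb0 : colblk lam p = J.+1 by apply: cbJ; lia.
  have cbm : colblk lam (p + m.+1) = J.+1 by apply: cbJ; lia.
  have H1 : Hentry lam p.+1 p = true by apply: E5; lia.
  have H2 : Hentry lam p.+1 (p + m.+1) = false.
    rewrite Hentry_diag /=; first lia.
    by rewrite rowblkS ?cb0 ?cbm //; lia.
  have H3 : Hentry lam (p + m.+1).+1 p = false.
    rewrite Hentry_diag /=; first lia.
    by rewrite rowblkS ?cb0 ?cbm //; lia.
  have H4 : Hentry lam (p + m.+1).+1 (p + m.+1) = true by apply: E5; lia.
  have H5 : forall r, r != p.+1 -> r != (p + m.+1).+1 -> Hentry lam r p = Hentry lam r (p + m.+1).
    move=> r r1 r2; apply: Hentry_eq; first by rewrite cb0 cbm.
    case: r r1 r2 => [|r] r1 r2; [by left|right]; rewrite /=; lia.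
  have hm1 : m.+1 < n by lia.
  rewrite (@cn_exact2 _ _ _ _ (Ordinal n0) (Ordinal hm1)) //.
  move=> i; rewrite QE.
  have [->|ne1] := eqVneq i (Ordinal n0).
    by rewrite sE /= add0n modn_small ?H1 ?H2 //; lia.
  have [->|ne2] := eqVneq i (Ordinal hm1).
    have -> : val (s (Ordinal hm1)) = (p + m.+1).+1.
      rewrite sE /= modn_small; lia.
    by rewrite H3 H4 eqxx orbT.
  have r1 : val (s i) != p.+1.
    apply: contra ne1 => /eqP e; apply/eqP/(@perm_inj _ s)/val_inj.
    by rewrite e sE /= add0n modn_small //; lia.
  have r2 : val (s i) != (p + m.+1).+1.
    apply: contra ne2 => /eqP e; apply/eqP/(@perm_inj _ s)/val_inj.
    by rewrite e sE /= modn_small; lia.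
  rewrite H5 // -[\val i == \val (Ordinal n0)]/(i == Ordinal n0).
  rewrite -[\val i == \val (Ordinal hm1)]/(i == Ordinal hm1).
  by rewrite (negbTE ne1) (negbTE ne2); case: Hentry.
pose A := map gg (iota 0 a.+1).
pose R := map F (iota a.+1 (n.+1 - a.+1)).
have an : a.+1 <= n.+1 by lia.
have eS : map F (iota 0 n.+1) = A ++ R.
  rewrite -{1}(subnKC an) iotaD map_cat; congr (_ ++ _).
  by rewrite /A; apply/eq_in_map => c; rewrite mem_iota /= => hc; apply: FA.
have eAb : map gg (iota 0 a.+2) = rcons A (gg a.+1).
  by rewrite -addn1 iotaD map_cat cats1.
have sAb : sorted ltn (rcons A (gg a.+1)) by rewrite -eAb gg_sorted.
case esR: (sort leq R) => [|y r].
  by move/(congr1 size): esR; rewrite size_sort size_map size_iota /=; lia.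
have yR : gg a.+1 < y.
  have : y \in sort leq R by rewrite esR mem_head.
  rewrite mem_sort => /mapP[c]; rewrite mem_iota => hc ->; apply: FR; lia.
have sAy : sorted leq (A ++ y :: r).
  rewrite sorted_cat_cons; apply/andP; split.
    move: sAb yR; case: (A) => [//|x A'] /=; rewrite !rcons_path => /andP[pA lb] lby.
    apply/andP; split; first by apply: (sub_path _ pA) => u v /ltnW.
    exact: leq_trans (ltnW lb) (ltnW lby).
  by have := sort_sorted leq_total R; rewrite esR.
have -> : nu Z = A ++ y :: r.
  rewrite nuZ eS -(sorted_sort leq_trans sAy); apply/perm_sortP.
  - exact: leq_total.
  - exact: leq_trans.
  - exact: anti_leq.
  by rewrite perm_cat2l -esR perm_sym perm_sort perm_refl.
apply: (@lex_key _ _ (gg a.+1)) => //; first by rewrite /nu; apply: (sort_sorted leq_total).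
move=> z; rewrite -eAb => /mapP[m]; rewrite mem_iota => hm ->; apply: QA; lia.
Qed.
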